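(* Let $\mathbb{X}$ be a real reflexive Banach space and $\mathbb{Y}$ a real normed space, $\epsilon\in[0,1)$, and $T,A\in\mathbb{K}(\mathbb{X},\mathbb{Y})$. Suppose $M_T=D\cup(-D)$, where $D$ is a nonempty compact connected subset of $S_{\mathbb{X}}$. Then $T\perp_B^{\epsilon}A$ if and only if there exists $x\in M_T$ such that $\|Tx+\lambda Ax\|^2\ge\|T\|^2-2\epsilon\|T\|\|\lambda A\|$ for all $\lambda\in\mathbb{R}$. Moreover, if in addition $M_T\subseteq M_A$, then $T\perp_B^{\epsilon}A$ if and only if there exists $x\in M_T$ with $Tx\perp_B^{\epsilon}Ax$.
   Context: $\mathbb{K}(\mathbb{X},\mathbb{Y})$ is the space of compact linear operators from $\mathbb{X}$ to $\mathbb{Y}$ with the operator norm. $S_{\mathbb{X}}$ is the unit sphere of $\mathbb{X}$; $M_T=\{x\in S_{\mathbb{X}}:\|Tx\|=\|T\|\}$. For $\epsilon\in[0,1)$ and $u,v$ in a normed space, $u\perp_B^{\epsilon}v$ means $\|u+\lambda v\|^2\ge\|u\|^2-2\epsilon\|u\|\|\lambda v\|$ for all $\lambda\in\mathbb{R}$. *)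

(* Defs.v *)
From Stdlib Require Import Reals Classical ClassicalEpsilon.
Open Scope R_scope.

Record NormedSpace := mkNormedSpace {
  ns_car :> Type;
  ns_zero : ns_car;
  ns_add : ns_car -> ns_car -> ns_car;
  ns_opp : ns_car -> ns_car;
  ns_scal : R -> ns_car -> ns_car;
  ns_norm : ns_car -> R;
  ns_add_assoc : forall x y z, ns_add x (ns_add y z) = ns_add (ns_add x y) z;
  ns_add_comm : forall x y, ns_add x y = ns_add y x;
  ns_add_0 : forall x, ns_add x ns_zero = x;
  ns_add_opp : forall x, ns_add x (ns_opp x) = ns_zero;
  ns_scal_assoc : forall a b x, ns_scal a (ns_scal b x) = ns_scal (a * b) x;
  ns_scal_1 : forall x, ns_scal 1 x = x;
  ns_scal_distr_l : forall a x y, ns_scal a (ns_add x y) = ns_add (ns_scal a x) (ns_scal a y);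
  ns_scal_distr_r : forall a b x, ns_scal (a + b) x = ns_add (ns_scal a x) (ns_scal b x);
  ns_norm_eq0 : forall x, ns_norm x = 0 -> x = ns_zero;
  ns_norm_triangle : forall x y, ns_norm (ns_add x y) <= ns_norm x + ns_norm y;
  ns_norm_scal : forall a x, ns_norm (ns_scal a x) = Rabs a * ns_norm x
}.

Arguments ns_zero {_}.
Arguments ns_add {_} _ _.
Arguments ns_opp {_} _.
Arguments ns_scal {_} _ _.
Arguments ns_norm {_} _.

Definition ns_sub {X : NormedSpace} (x y : X) : X := ns_add x (ns_opp y).

Definition converges {X : NormedSpace} (u : nat -> X) (l : X) : Prop :=
  forall e, 0 < e -> exists N, forall n, (N <= n)%nat -> ns_norm (ns_sub (u n) l) < e.

Definition cauchy {X : NormedSpace} (u : nat -> X) : Prop :=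
  forall e, 0 < e -> exists N, forall m n, (N <= m)%nat -> (N <= n)%nat ->
    ns_norm (ns_sub (u m) (u n)) < e.

Definition Banach (X : NormedSpace) : Prop :=
  forall u : nat -> X, cauchy u -> exists l, converges u l.

Definition strictly_increasing (phi : nat -> nat) : Prop :=
  forall n, (phi n < phi (S n))%nat.

(** Compact subset (metric space: sequential compactness). *)
Definition compact_set {X : NormedSpace} (K : X -> Prop) : Prop :=
  forall u : nat -> X, (forall n, K (u n)) ->
    exists phi l, strictly_increasing phi /\ K l /\ converges (fun n => u (phi n)) l.

Definition open_set {X : NormedSpace} (U : X -> Prop) : Prop :=
  forall x, U x -> exists r, 0 < r /\ forall y, ns_norm (ns_sub y x) < r -> U y.

(** Connected subset (in the subspace topology). *)
Definition connected_set {X : NormedSpace} (K : X -> Prop) : Prop :=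
  forall U V : X -> Prop, open_set U -> open_set V ->
    (forall x, K x -> U x \/ V x) ->
    (exists x, K x /\ U x) -> (exists x, K x /\ V x) ->
    exists x, K x /\ U x /\ V x.

Definition linear_map {X Y : NormedSpace} (T : X -> Y) : Prop :=
  (forall x y, T (ns_add x y) = ns_add (T x) (T y)) /\
  (forall a x, T (ns_scal a x) = ns_scal a (T x)).

(** sup { nB (T x) : ||x|| <= 1 } (when this least upper bound exists). *)
Definition sup_norm {X : NormedSpace} {B : Type} (nB : B -> R) (T : X -> B) : R :=
  epsilon (inhabits 0)
    (fun c => is_lub (fun r => exists x : X, ns_norm x <= 1 /\ r = nB (T x)) c).

Definition opnorm {X Y : NormedSpace} (T : X -> Y) : R := sup_norm (@ns_norm Y) T.

(** Compact linear operator: images of bounded sequences have convergent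
    subsequences (i.e. T maps the unit ball to a relatively compact set). *)
Definition compact_op {X Y : NormedSpace} (T : X -> Y) : Prop :=
  linear_map T /\
  forall u : nat -> X, (forall n, ns_norm (u n) <= 1) ->
    exists phi l, strictly_increasing phi /\ converges (fun n => T (u (phi n))) l.

(** Reflexivity: the canonical embedding X -> X** is onto.  Elements of X**
    are given by functions on (X -> R) that are linear and bounded on the
    bounded linear functionals (their values elsewhere are irrelevant). *)
Definition bounded_linear_functional {X : NormedSpace} (f : X -> R) : Prop :=
  ((forall x y, f (ns_add x y) = f x + f y) /\ (forall a x, f (ns_scal a x) = a * f x)) /\
  exists C, forall x, Rabs (f x) <= C * ns_norm x.

Definition dual_norm {X : NormedSpace} (f : X -> R) : R := sup_norm Rabs f.

Definition reflexive (X : NormedSpace) : Prop :=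
  forall Phi : (X -> R) -> R,
    (forall f g, bounded_linear_functional f -> bounded_linear_functional g ->
       Phi (fun x => f x + g x) = Phi f + Phi g) ->
    (forall a f, bounded_linear_functional f -> Phi (fun x => a * f x) = a * Phi f) ->
    (exists C, forall f, bounded_linear_functional f -> Rabs (Phi f) <= C * dual_norm f) ->
    exists x0 : X, forall f, bounded_linear_functional f -> Phi f = f x0.

Definition M_set {X Y : NormedSpace} (T : X -> Y) (x : X) : Prop :=
  ns_norm x = 1 /\ ns_norm (T x) = opnorm T.

Definition bj_eps {V : Type} (add : V -> V -> V) (scal : R -> V -> V) (nrm : V -> R)
    (eps : R) (u v : V) : Prop :=
  forall lam : R, (nrm (add u (scal lam v)))^2 >= (nrm u)^2 - 2 * eps * nrm u * nrm (scal lam v).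

Definition bj_vec {Y : NormedSpace} (eps : R) (u v : Y) : Prop :=
  bj_eps (@ns_add Y) (@ns_scal Y) (@ns_norm Y) eps u v.

Definition bj_op {X Y : NormedSpace} (eps : R) (T A : X -> Y) : Prop :=
  bj_eps (fun S1 S2 x => ns_add (S1 x) (S2 x)) (fun a S x => ns_scal a (S x))
         (@opnorm X Y) eps T A.

(* Main.v *)
Require Import Defs.
From Stdlib Require Import Reals Lra Psatz Classical ClassicalEpsilon FunctionalExtensionality PropExtensionality.
From mathcomp Require boolp classical_sets.
Open Scope R_scope.

Record VSpace := mkVS {
  vs_car :> Type;
  vs0 : vs_car;
  vsadd : vs_car -> vs_car -> vs_car;
  vsscal : R -> vs_car -> vs_car;
  vs_add_assoc : forall x y z, vsadd x (vsadd y z) = vsadd (vsadd x y) z;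
  vs_add_comm : forall x y, vsadd x y = vsadd y x;
  vs_add_0 : forall x, vsadd x vs0 = x;
  vs_add_opp : forall x, vsadd x (vsscal (-1) x) = vs0;
  vs_scal_assoc : forall a b x, vsscal a (vsscal b x) = vsscal (a*b) x;
  vs_scal_1 : forall x, vsscal 1 x = x;
  vs_distr_l : forall a x y, vsscal a (vsadd x y) = vsadd (vsscal a x) (vsscal a y);
  vs_distr_r : forall a b x, vsscal (a+b) x = vsadd (vsscal a x) (vsscal b x)
}.
Arguments vs0 {_}.
Arguments vsadd {_} _ _.
Arguments vsscal {_} _ _.
Arguments vs_add_assoc {_} _ _ _.
Arguments vs_add_comm {_} _ _.
Arguments vs_add_0 {_} _.
Arguments vs_add_opp {_} _.
Arguments vs_scal_assoc {_} _ _ _.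
Arguments vs_scal_1 {_} _.
Arguments vs_distr_l {_} _ _ _.
Arguments vs_distr_r {_} _ _ _.

Section VSL.
Context {V : VSpace}.

Lemma vs_scal0 (x : V) : vsscal 0 x = vs0.
Proof.
  replace 0 with (1 + -1) by ring. rewrite vs_distr_r, vs_scal_1. apply vs_add_opp.
Qed.

Lemma vs_scalz (a : R) : vsscal a (@vs0 V) = vs0.
Proof. transitivity (vsscal a (vsscal 0 (@vs0 V))). { rewrite vs_scal0. reflexivity. } rewrite vs_scal_assoc, Rmult_0_r. apply vs_scal0. Qed.

Lemma vs_0_add (x : V) : vsadd vs0 x = x.
Proof. rewrite vs_add_comm. apply vs_add_0. Qed.

Lemma vs_collect (p q z : V) a b :
  vsadd (vsadd p (vsscal a z)) (vsadd q (vsscal b z)) = vsadd (vsadd p q) (vsscal (a+b) z).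
Proof.
  rewrite vs_distr_r.
  rewrite <- !vs_add_assoc. f_equal.
  rewrite vs_add_assoc, (vs_add_comm (vsscal a z) q), <- vs_add_assoc. reflexivity.
Qed.

Lemma vs_scal_comb (x z : V) k a : vsscal k (vsadd x (vsscal a z)) = vsadd (vsscal k x) (vsscal (k*a) z).
Proof. rewrite vs_distr_l, vs_scal_assoc. reflexivity. Qed.

Lemma vs_cancel_l (x y y' : V) : vsadd x y = vsadd x y' -> y = y'.
Proof.
  intro H. assert (H2 := f_equal (vsadd (vsscal (-1) x)) H).
  rewrite !vs_add_assoc, (vs_add_comm _ x), vs_add_opp, !vs_0_add in H2. exact H2.
Qed.

End VSL.

Definition subsp {V : VSpace} (G : V -> Prop) : Prop :=
  G vs0 /\ (forall x y, G x -> G y -> G (vsadd x y)) /\ (forall a x, G x -> G (vsscal a x)).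

Definition linear_on {V : VSpace} (G : V -> Prop) (g : V -> R) : Prop :=
  (forall x y, G x -> G y -> g (vsadd x y) = g x + g y) /\
  (forall a x, G x -> g (vsscal a x) = a * g x).

Definition sublinear_on {V : VSpace} (W : V -> Prop) (p : V -> R) : Prop :=
  (forall x y, W x -> W y -> p (vsadd x y) <= p x + p y) /\
  (forall a x, 0 < a -> W x -> p (vsscal a x) = a * p x).

Section HBsec.
Context {V : VSpace} (W W0 : V -> Prop) (p f0 : V -> R).

Definition Inv (G : V -> Prop) (g : V -> R) : Prop :=
  @subsp V G /\ (forall x, G x -> W x) /\ (forall x, W0 x -> G x) /\ @linear_on V G g /\
  (forall x, W0 x -> g x = f0 x) /\ (forall x, G x -> g x <= p x).

Lemma lin0 G g : @subsp V G -> @linear_on V G g -> g vs0 = 0.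
Proof.
  intros [H0 _] [_ Hs]. rewrite <- (vs_scal0 vs0), Hs by exact H0. ring.
Qed.

Lemma one_step (HW : @subsp V W) (Hp : @sublinear_on V W p) G g z :
  Inv G g -> W z -> ~ G z ->
  exists G' g', Inv G' g' /\ (forall v, G v -> G' v) /\ (forall v, G v -> g' v = g v) /\ G' z.
Proof.
  intros HI Wz nGz.
  destruct HI as (HG & HGW & HW0G & Hlin & Hf0 & Hdom).
  destruct HW as (W0' & Wadd & Wscal).
  destruct Hp as (padd & pscal).
  destruct HG as (G0 & Gadd & Gscal).
  destruct Hlin as (gadd & gscal).
  assert (g0 : g vs0 = 0) by (apply (lin0 G g); [split; [|split]; auto | split; auto]).
  set (mz := vsscal (-1) z).
  assert (key : forall x y, G x -> G y -> g x - p (vsadd x mz) <= p (vsadd y z) - g y).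
  { intros x y Gx Gy.
    assert (E : vsadd (vsadd x mz) (vsadd y z) = vsadd x y).
    { unfold mz. rewrite <- (vs_scal_1 z) at 2.
      rewrite vs_collect. replace (-1 + 1) with 0 by ring. rewrite vs_scal0, vs_add_0. reflexivity. }
    assert (h1 := padd (vsadd x mz) (vsadd y z)).
    rewrite E in h1.
    assert (h2 : g (vsadd x y) <= p (vsadd x y)) by auto.
    rewrite gadd in h2 by auto.
    assert (p (vsadd x y) <= p (vsadd x mz) + p (vsadd y z)).
    { apply h1; apply Wadd; auto; unfold mz; auto. }
    lra. }
  set (S := fun r => exists x, G x /\ r = g x - p (vsadd x mz)).
  assert (Sb : bound S).
  { exists (p (vsadd vs0 z) - g vs0). intros r [x [Gx ->]]. apply key; auto. }
  assert (Sne : exists r, S r) by (exists (g vs0 - p (vsadd vs0 mz)); exists vs0; auto).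
  destruct (completeness S Sb Sne) as [c [cub club]].
  assert (c1 : forall x, G x -> g x - p (vsadd x mz) <= c) by (intros x Gx; apply cub; exists x; auto).
  assert (c2 : forall y, G y -> c <= p (vsadd y z) - g y).
  { intros y Gy. apply club. intros r [x [Gx ->]]. apply key; auto. }
  assert (uniq : forall x x' a a', G x -> G x' -> vsadd x (vsscal a z) = vsadd x' (vsscal a' z) -> x = x' /\ a = a').
  { intros x x' a a' Gx Gx' E.
    assert (E2 := f_equal (fun v => vsadd v (vsadd (vsscal (-1) x') (vsscal (-a) z))) E).
    simpl in E2. rewrite !vs_collect in E2.
    replace (a + - a) with 0 in E2 by ring. rewrite vs_scal0, vs_add_0, vs_add_opp, vs_0_add in E2.
    destruct (Req_dec a a') as [ea|na].
    - split; auto. subst a'. rewrite !(vs_add_comm _ (vsscal a z)) in E. apply vs_cancel_l in E. exact E.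
    - exfalso. apply nGz.
      assert (Gd : G (vsscal (a' + - a) z)) by (rewrite <- E2; apply Gadd; auto).
      apply (Gscal (/ (a' + - a))) in Gd. rewrite vs_scal_assoc, Rinv_l, vs_scal_1 in Gd by lra. exact Gd. }
  set (G' := fun v => exists x a, G x /\ v = vsadd x (vsscal a z)).
  set (g' := fun v => epsilon (inhabits 0) (fun r => exists x a, G x /\ v = vsadd x (vsscal a z) /\ r = g x + a * c)).
  assert (g'spec : forall x a, G x -> g' (vsadd x (vsscal a z)) = g x + a * c).
  { intros x a Gx. unfold g'.
    assert (ex : exists r, exists x0 a0, G x0 /\ vsadd x (vsscal a z) = vsadd x0 (vsscal a0 z) /\ r = g x0 + a0 * c)
      by (exists (g x + a * c); exists x, a; auto).
    destruct (epsilon_spec (inhabits 0) _ ex) as (x0 & a0 & Gx0 & E & ->).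
    destruct (uniq x x0 a a0) as [-> ->]; auto. }
  assert (Gsplit : forall v, G v -> v = vsadd v (vsscal 0 z)) by (intros v _; rewrite vs_scal0, vs_add_0; auto).
  exists G', g'. split; [|split; [|split]].
  - split; [|split; [|split; [|split; [|split]]]].
    + split; [|split].
      * exists vs0, 0. rewrite vs_scal0, vs_add_0. auto.
      * intros v w (x & a & Gx & ->) (y & b & Gy & ->). exists (vsadd x y), (a + b). rewrite vs_collect. auto.
      * intros k v (x & a & Gx & ->). exists (vsscal k x), (k * a). rewrite vs_scal_comb. auto.
    + intros v (x & a & Gx & ->). apply Wadd; auto.
    + intros v H. exists v, 0. split; auto.
    + split.
      * intros v w (x & a & Gx & ->) (y & b & Gy & ->). rewrite vs_collect, !g'spec, gadd by auto. ring.
      * intros k v (x & a & Gx & ->). rewrite vs_scal_comb, !g'spec, gscal by auto. ring.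
    + intros v H. assert (Gv : G v) by auto. rewrite (Gsplit v Gv) at 1. rewrite g'spec by auto. rewrite Hf0 by auto. ring.
    + intros v (x & a & Gx & ->). rewrite g'spec by auto.
      destruct (Rtotal_order a 0) as [an|[a0|ap]].
      * set (b := - a). assert (bp : 0 < b) by (unfold b; lra).
        set (x1 := vsscal (/ b) x).
        assert (Gx1 : G x1) by (unfold x1; auto).
        assert (h := c1 x1 Gx1).
        assert (Ex : vsscal b (vsadd x1 mz) = vsadd x (vsscal a z)).
        { unfold x1, mz. rewrite vs_scal_comb, vs_scal_assoc, Rinv_r, vs_scal_1 by lra. f_equal. f_equal. unfold b. ring. }
        assert (hp := pscal b (vsadd x1 mz) bp). rewrite Ex in hp.
        assert (hg : g x = b * g x1).
        { unfold x1. rewrite gscal by auto. field. lra. }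
        rewrite hp by (apply Wadd; unfold x1, mz; auto). rewrite hg.
        replace a with (- b) by (unfold b; ring).
        assert (b * (g x1 - p (vsadd x1 mz)) <= b * c) by (apply Rmult_le_compat_l; lra). nra.
      * subst a. rewrite <- Gsplit by auto. rewrite Rmult_0_l, Rplus_0_r. auto.
      * set (x1 := vsscal (/ a) x).
        assert (Gx1 : G x1) by (unfold x1; auto).
        assert (h := c2 x1 Gx1).
        assert (Ex : vsscal a (vsadd x1 z) = vsadd x (vsscal a z)).
        { unfold x1. rewrite vs_distr_l, vs_scal_assoc, Rinv_r, vs_scal_1 by lra. reflexivity. }
        assert (hp := pscal a (vsadd x1 z) ap). rewrite Ex in hp.
        assert (hg : g x = a * g x1).
        { unfold x1. rewrite gscal by auto. field. lra. }
        rewrite hp by (apply Wadd; unfold x1; auto). rewrite hg.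
        assert (a * c <= a * (p (vsadd x1 z) - g x1)) by (apply Rmult_le_compat_l; lra). nra.
  - intros v H. exists v, 0. split; auto.
  - intros v H. rewrite (Gsplit v H) at 1. rewrite g'spec by auto. ring.
  - exists vs0, 1. rewrite vs_scal_1, vs_0_add. auto.
Qed.


Lemma asbT (P : Prop) : is_true (boolp.asbool P) <-> P.
Proof. split; intro H; [exact (ssrbool.elimT (boolp.asboolP P) H) | exact (ssrbool.introT (boolp.asboolP P) H)]. Qed.
Lemma asbE (P : Prop) : is_true (boolp.asbool P) -> P.
Proof. apply asbT. Qed.
Lemma asbI (P : Prop) : P -> is_true (boolp.asbool P).
Proof. apply asbT. Qed.

Definition Ext (s t : (V -> Prop) * (V -> R)) : Prop :=
  (forall v, fst s v -> fst t v) /\ (forall v, fst s v -> snd t v = snd s v).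

Theorem hahn_banach (HW : @subsp V W) (HW0 : @subsp V W0) (HW0W : forall x, W0 x -> W x)
  (Hp : @sublinear_on V W p) (Hf : @linear_on V W0 f0) (Hfp : forall x, W0 x -> f0 x <= p x) :
  exists F, @linear_on V W F /\ (forall x, W0 x -> F x = f0 x) /\ (forall x, W x -> F x <= p x).
Proof.
  set (E := { t : (V -> Prop) * (V -> R) | Inv (fst t) (snd t) }).
  assert (I0 : Inv W0 f0).
  { split; [|split; [|split; [|split; [|split]]]]; auto. }
  set (t0 := exist (fun t : (V -> Prop) * (V -> R) => Inv (fst t) (snd t)) (W0, f0) I0 : E).
  set (Rl := fun s t : E => boolp.asbool (Ext (proj1_sig s) (proj1_sig t))).
  destruct (@classical_sets.ZL_preorder E t0 Rl) as [tm Hmax].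
  - intro t. unfold Rl. apply asbI. split; auto.
  - intros r s t H1 H2. unfold Rl in *. apply asbE in H1. apply asbE in H2. apply asbI.
    unfold Ext in *. destruct H1 as [a1 b1], H2 as [a2 b2]. split; auto.
    intros v Hv. rewrite b2 by auto. auto.
  - intros A Atot. unfold Rl, Ext in *.
    assert (cons : forall e1 e2 v, A e1 -> A e2 -> fst (proj1_sig e1) v -> fst (proj1_sig e2) v ->
              snd (proj1_sig e1) v = snd (proj1_sig e2) v).
    { intros e1 e2 v A1 A2 H1 H2. destruct (Atot e1 e2 A1 A2) as [h|h]; apply asbE in h; destruct h as [_ h].
      - symmetry. auto.
      - auto. }
    set (Gu := fun v => W0 v \/ exists e, A e /\ fst (proj1_sig e) v).
    set (gu := fun v => epsilon (inhabits 0) (fun r => (exists e, A e /\ fst (proj1_sig e) v /\ r = snd (proj1_sig e) v) \/ (W0 v /\ r = f0 v))).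
    assert (invE : forall e : E, Inv (fst (proj1_sig e)) (snd (proj1_sig e))) by (intro e; exact (proj2_sig e)).
    assert (gu1 : forall e v, A e -> fst (proj1_sig e) v -> gu v = snd (proj1_sig e) v).
    { intros e v Ae He. unfold gu.
      assert (ex : exists r, (exists e, A e /\ fst (proj1_sig e) v /\ r = snd (proj1_sig e) v) \/ (W0 v /\ r = f0 v))
        by (exists (snd (proj1_sig e) v); left; exists e; auto).
      destruct (epsilon_spec (inhabits 0) _ ex) as [(e' & Ae' & He' & ->)|(Wv & ->)].
      - apply cons; auto.
      - destruct (invE e) as (_ & _ & _ & _ & hf & _). symmetry. auto. }
    assert (gu2 : forall v, W0 v -> gu v = f0 v).
    { intros v Wv. unfold gu.
      assert (ex : exists r, (exists e, A e /\ fst (proj1_sig e) v /\ r = snd (proj1_sig e) v) \/ (W0 v /\ r = f0 v))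
        by (exists (f0 v); right; auto).
      destruct (epsilon_spec (inhabits 0) _ ex) as [(e' & Ae' & He' & ->)|(_ & ->)]; auto.
      destruct (invE e') as (_ & _ & _ & _ & hf & _). auto. }
    assert (two : forall x y, Gu x -> Gu y -> (W0 x /\ W0 y) \/ exists e, A e /\ fst (proj1_sig e) x /\ fst (proj1_sig e) y).
    { intros x y [Hx|(e1 & A1 & H1)] [Hy|(e2 & A2 & H2)].
      - left; auto.
      - right. exists e2. destruct (invE e2) as (_ & _ & h & _). auto.
      - right. exists e1. destruct (invE e1) as (_ & _ & h & _). auto.
      - right. destruct (Atot e1 e2 A1 A2) as [h|h]; apply asbE in h; destruct h as [h _].
        + exists e2. auto.
        + exists e1. auto. }
    assert (Iu : Inv Gu gu).
    { destruct HW0 as (z0 & zadd & zscal). destruct Hf as (fadd & fscal).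
      split; [|split; [|split; [|split; [|split]]]].
      - split; [|split].
        + left. auto.
        + intros x y Hx Hy. destruct (two x y Hx Hy) as [[a b]|(e & Ae & a & b)].
          * left; auto.
          * right. exists e. split; auto. destruct (invE e) as ((_ & h & _) & _). auto.
        + intros a x [Hx|(e & Ae & Hx)].
          * left; auto.
          * right. exists e. split; auto. destruct (invE e) as ((_ & _ & h) & _). auto.
      - intros x [Hx|(e & Ae & Hx)]; auto. destruct (invE e) as (_ & h & _). auto.
      - intros x Hx. left. auto.
      - split.
        + intros x y Hx Hy. destruct (two x y Hx Hy) as [[a b]|(e & Ae & a & b)].
          * rewrite !gu2; auto.
          * destruct (invE e) as ((_ & h & _) & _ & _ & (ladd & _) & _).
            rewrite !(gu1 e) by auto. auto.
        + intros k x [Hx|(e & Ae & Hx)].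
          * rewrite !gu2; auto.
          * destruct (invE e) as ((_ & _ & h) & _ & _ & (_ & lscal) & _).
            rewrite !(gu1 e) by auto. auto.
      - auto.
      - intros x [Hx|(e & Ae & Hx)].
        + rewrite gu2; auto.
        + rewrite (gu1 e) by auto. destruct (invE e) as (_ & _ & _ & _ & _ & h). auto. }
    exists (exist (fun t : (V -> Prop) * (V -> R) => Inv (fst t) (snd t)) (Gu, gu) Iu).
    intros s As. apply asbI. split; simpl.
    + intros v Hv. right. exists s. auto.
    + intros v Hv. apply (gu1 s); auto.
  - destruct tm as [[G g] It]. simpl in *.
    assert (full : forall v, W v -> G v).
    { intros z Wz. apply NNPP. intro nG.
      destruct (one_step HW Hp G g z It Wz nG) as (G' & g' & I' & s1 & s2 & Gz).
      set (e := exist (fun t : (V -> Prop) * (V -> R) => Inv (fst t) (snd t)) (G', g') I' : E).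
      assert (h : is_true (Rl (exist _ (G, g) It) e)).
      { apply asbI. split; simpl; auto. }
      apply Hmax in h. apply asbE in h. destruct h as [h _]. simpl in h. auto. }
    destruct It as (HG & HGW & HW0G & Hlin & Hf0 & Hdom).
    exists g. split; [|split]; auto.
    destruct Hlin as [la ls]. split; auto.
Qed.

End HBsec.
Arguments ns_add_assoc {_} _ _ _.
Arguments ns_add_comm {_} _ _.
Arguments ns_add_0 {_} _.
Arguments ns_add_opp {_} _.
Arguments ns_scal_assoc {_} _ _ _.
Arguments ns_scal_1 {_} _.
Arguments ns_scal_distr_l {_} _ _ _.
Arguments ns_scal_distr_r {_} _ _ _.
Arguments ns_norm_eq0 {_} _ _.
Arguments ns_norm_triangle {_} _ _.
Arguments ns_norm_scal {_} _ _.

Lemma Rabs_m1' : Rabs (-1) = 1.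
Proof. unfold Rabs; destruct Rcase_abs; lra. Qed.

Section NSL.
Context {X : NormedSpace}.
Implicit Types x y z : X.

Lemma ns_0_add x : ns_add ns_zero x = x.
Proof. rewrite ns_add_comm. apply ns_add_0. Qed.

Lemma ns_cancel x y y' : ns_add x y = ns_add x y' -> y = y'.
Proof.
  intro H. assert (H2 := f_equal (ns_add (ns_opp x)) H).
  rewrite !ns_add_assoc, (ns_add_comm _ x), ns_add_opp, !ns_0_add in H2. exact H2.
Qed.

Lemma ns_scal0 x : ns_scal 0 x = ns_zero.
Proof.
  assert (H : ns_add (ns_scal 0 x) (ns_scal 0 x) = ns_add (ns_scal 0 x) ns_zero).
  { rewrite <- ns_scal_distr_r, Rplus_0_r, ns_add_0. reflexivity. }
  apply ns_cancel in H. exact H.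
Qed.

Lemma ns_scalm1 x : ns_scal (-1) x = ns_opp x.
Proof.
  apply (ns_cancel x). rewrite ns_add_opp.
  rewrite <- (ns_scal_1 x) at 1. rewrite <- ns_scal_distr_r.
  replace (1 + -1) with 0 by ring. apply ns_scal0.
Qed.

Lemma ns_scalz a : ns_scal a (@ns_zero X) = ns_zero.
Proof. rewrite <- (ns_scal0 ns_zero) at 1. rewrite ns_scal_assoc, Rmult_0_r. apply ns_scal0. Qed.

Lemma ns_norm_zero : ns_norm (@ns_zero X) = 0.
Proof. rewrite <- (ns_scal0 ns_zero), ns_norm_scal, Rabs_R0. ring. Qed.

Lemma ns_norm_nonneg x : 0 <= ns_norm x.
Proof.
  assert (H := ns_norm_triangle x (ns_scal (-1) x)).
  rewrite ns_scalm1, ns_add_opp, ns_norm_zero in H.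
  rewrite <- ns_scalm1, ns_norm_scal in H. rewrite Rabs_m1' in H. lra.
Qed.

Lemma ns_norm_opp x : ns_norm (ns_opp x) = ns_norm x.
Proof. rewrite <- ns_scalm1, ns_norm_scal, Rabs_m1'. ring. Qed.

Lemma ns_sub_norm_sym x y : ns_norm (ns_sub x y) = ns_norm (ns_sub y x).
Proof.
  unfold ns_sub. rewrite <- ns_norm_opp. f_equal.
  rewrite <- !ns_scalm1, ns_scal_distr_l, ns_scal_assoc.
  replace (-1 * -1) with 1 by ring. rewrite ns_scal_1. apply ns_add_comm.
Qed.

Lemma ns_sub_add x y : ns_add (ns_sub x y) y = x.
Proof. unfold ns_sub. rewrite <- ns_add_assoc, (ns_add_comm _ y), ns_add_opp, ns_add_0. reflexivity. Qed.

Lemma ns_norm_rev x y : ns_norm x - ns_norm y <= ns_norm (ns_sub x y).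
Proof.
  assert (H := ns_norm_triangle (ns_sub x y) y). rewrite ns_sub_add in H. lra.
Qed.

Lemma ns_norm_sub_le x y : ns_norm (ns_sub x y) <= ns_norm x + ns_norm y.
Proof. unfold ns_sub. rewrite <- (ns_norm_opp y). apply ns_norm_triangle. Qed.

Lemma ns_sub_eq0 x y : ns_norm (ns_sub x y) = 0 -> x = y.
Proof.
  intro H. apply ns_norm_eq0 in H. rewrite <- (ns_sub_add x y), H. apply ns_0_add.
Qed.

Lemma ns_sub_self x : ns_sub x x = ns_zero.
Proof. apply ns_add_opp. Qed.

End NSL.

Definition NS_VS (X : NormedSpace) : VSpace.
Proof.
  refine (mkVS X ns_zero ns_add ns_scal _ _ _ _ _ _ _ _).
  - apply ns_add_assoc. - apply ns_add_comm. - apply ns_add_0.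
  - intro x. rewrite ns_scalm1. apply ns_add_opp.
  - apply ns_scal_assoc. - apply ns_scal_1. - apply ns_scal_distr_l. - apply ns_scal_distr_r.
Defined.

Definition FUN_VS (T : Type) : VSpace.
Proof.
  refine (mkVS (T -> R) (fun _ => 0) (fun f g x => f x + g x) (fun a f x => a * f x) _ _ _ _ _ _ _ _);
  intros; apply functional_extensionality; intros; ring.
Defined.

Definition blin {X Y : NormedSpace} (T : X -> Y) : Prop :=
  linear_map T /\ exists C, forall x, ns_norm (T x) <= C * ns_norm x.

Lemma lin_zero {X Y : NormedSpace} (T : X -> Y) : linear_map T -> T ns_zero = ns_zero.
Proof.
  intros [_ Hs]. rewrite <- (ns_scal0 ns_zero), Hs. apply ns_scal0.
Qed.

Lemma lin_sub {X Y : NormedSpace} (T : X -> Y) x y : linear_map T -> T (ns_sub x y) = ns_sub (T x) (T y).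
Proof.
  intros [Ha Hs]. unfold ns_sub. rewrite Ha, <- !ns_scalm1, Hs. reflexivity.
Qed.

Lemma nat_big (r : R) : exists n : nat, r < INR n.
Proof. destruct (INR_unbounded r) as [n Hn]. exists n. lra. Qed.

Lemma sinc_ge (phi : nat -> nat) : strictly_increasing phi -> forall k, (k <= phi k)%nat.
Proof. intros H k. induction k; [lia|]. specialize (H k). lia. Qed.

Lemma compact_blin {X Y : NormedSpace} (T : X -> Y) : compact_op T -> blin T.
Proof.
  intros [Hl Hc]. split; auto.
  apply NNPP. intro nb.
  assert (H : forall n : nat, exists x, ns_norm x <= 1 /\ INR n < ns_norm (T x)).
  { intro n. apply NNPP. intro hn. apply nb. exists (INR n). intro x.
    destruct (Req_dec (ns_norm x) 0) as [e|ne].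
    - apply ns_norm_eq0 in e. subst x. rewrite lin_zero by auto. rewrite !ns_norm_zero. lra.
    - assert (px : 0 < ns_norm x) by (pose proof (ns_norm_nonneg x); lra).
      set (x' := ns_scal (/ ns_norm x) x).
      assert (nx' : ns_norm x' = 1).
      { unfold x'. rewrite ns_norm_scal, Rabs_pos_eq by (left; apply Rinv_0_lt_compat; auto). field. lra. }
      assert (h : ns_norm (T x') <= INR n).
      { apply Rnot_lt_le. intro hl. apply hn. exists x'. split; [lra|auto]. }
      assert (Ex : x = ns_scal (ns_norm x) x').
      { unfold x'. rewrite ns_scal_assoc, Rinv_r, ns_scal_1 by lra. reflexivity. }
      rewrite Ex at 1. destruct Hl as [_ Hs]. rewrite Hs, ns_norm_scal, Rabs_pos_eq by lra. nra. }
  destruct (choice _ H) as [u Hu].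
  destruct (Hc u (fun n => proj1 (Hu n))) as (phi & l & Hphi & Hconv).
  destruct (Hconv 1 Rlt_0_1) as [N HN].
  destruct (nat_big (ns_norm l + 1)) as [m Hm].
  set (k := (N + m)%nat).
  assert (h1 := HN k ltac:(unfold k; lia)). simpl in h1.
  assert (h2 := proj2 (Hu (phi k))).
  assert (h3 : (m <= phi k)%nat) by (pose proof (sinc_ge phi Hphi k); unfold k in *; lia).
  apply le_INR in h3.
  assert (h4 := ns_norm_rev (T (u (phi k))) l). lra.
Qed.

Section SupNorm.
Context {X : NormedSpace} {B : Type} (nB : B -> R) (T : X -> B).
Hypothesis Hh : forall a x, nB (T (ns_scal a x)) = Rabs a * nB (T x).
Hypothesis Hb : exists C, forall x, nB (T x) <= C * ns_norm x.

Let S := fun r => exists x : X, ns_norm x <= 1 /\ r = nB (T x).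

Lemma T0 : nB (T ns_zero) = 0.
Proof. rewrite <- (ns_scal0 ns_zero), Hh, Rabs_R0. ring. Qed.

Lemma sup_is_lub : is_lub S (sup_norm nB T).
Proof.
  assert (ex : exists c, is_lub S c).
  { destruct Hb as [C HC].
    assert (bd : bound S).
    { exists (Rabs C). intros r [x [hx ->]]. specialize (HC x).
      pose proof (ns_norm_nonneg x). pose proof (Rle_abs C).
      assert (C * ns_norm x <= Rabs C).
      { destruct (Rle_dec 0 C).
        - assert (0 <= C * (1 - ns_norm x)) by (apply Rmult_le_pos; lra). lra.
        - assert (C * ns_norm x <= 0) by (assert (0 <= (-C) * ns_norm x) by (apply Rmult_le_pos; lra); lra). pose proof (Rabs_pos C). lra. }
      lra. }
    assert (ne : exists r, S r) by (exists 0; exists ns_zero; rewrite ns_norm_zero, T0; split; [lra|auto]).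
    destruct (completeness S bd ne) as [c Hc]. exists c; auto. }
  unfold sup_norm. apply (epsilon_spec (inhabits 0) _ ex).
Qed.

Lemma sup_ge x : ns_norm x <= 1 -> nB (T x) <= sup_norm nB T.
Proof. intro h. apply (proj1 sup_is_lub). exists x; auto. Qed.

Lemma sup_nonneg : 0 <= sup_norm nB T.
Proof. rewrite <- T0. apply sup_ge. rewrite ns_norm_zero. lra. Qed.

Lemma sup_bound x : nB (T x) <= sup_norm nB T * ns_norm x.
Proof.
  destruct (Req_dec (ns_norm x) 0) as [e|ne].
  - rewrite e. apply ns_norm_eq0 in e. subst x. rewrite T0. lra.
  - assert (px : 0 < ns_norm x) by (pose proof (ns_norm_nonneg x); lra).
    set (x' := ns_scal (/ ns_norm x) x).
    assert (nx' : ns_norm x' = 1).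
    { unfold x'. rewrite ns_norm_scal, Rabs_pos_eq by (left; apply Rinv_0_lt_compat; auto). field. lra. }
    assert (Ex : x = ns_scal (ns_norm x) x').
    { unfold x'. rewrite ns_scal_assoc, Rinv_r, ns_scal_1 by lra. reflexivity. }
    rewrite Ex at 1. rewrite Hh, Rabs_pos_eq by lra.
    assert (h := sup_ge x' ltac:(lra)). nra.
Qed.

Lemma sup_least M : (forall x, ns_norm x <= 1 -> nB (T x) <= M) -> sup_norm nB T <= M.
Proof. intro H. apply (proj2 sup_is_lub). intros r [x [hx ->]]. auto. Qed.

Lemma sup_approx d : 0 < d -> exists x, ns_norm x <= 1 /\ sup_norm nB T - d < nB (T x).
Proof.
  intro hd. apply NNPP. intro hn.
  assert (h : sup_norm nB T <= sup_norm nB T - d).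
  { apply sup_least. intros x hx. apply Rnot_lt_le. intro hl. apply hn. exists x. auto. }
  lra.
Qed.

End SupNorm.

Section Ops.
Context {X Y : NormedSpace}.

Lemma blin_hom (T : X -> Y) : linear_map T -> forall a x, ns_norm (T (ns_scal a x)) = Rabs a * ns_norm (T x).
Proof. intros [_ Hs] a x. rewrite Hs, ns_norm_scal. reflexivity. Qed.

Lemma opnorm_bound (T : X -> Y) : blin T -> forall x, ns_norm (T x) <= opnorm T * ns_norm x.
Proof. intros [Hl Hb]. apply (sup_bound ns_norm T (blin_hom T Hl) Hb). Qed.

Lemma opnorm_ge (T : X -> Y) : blin T -> forall x, ns_norm x <= 1 -> ns_norm (T x) <= opnorm T.
Proof. intros [Hl Hb]. apply (sup_ge ns_norm T (blin_hom T Hl) Hb). Qed.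

Lemma opnorm_least (T : X -> Y) M : blin T -> (forall x, ns_norm x <= 1 -> ns_norm (T x) <= M) -> opnorm T <= M.
Proof. intros [Hl Hb]. apply (sup_least ns_norm T (blin_hom T Hl) Hb). Qed.

Lemma opnorm_approx (T : X -> Y) d : blin T -> 0 < d -> exists x, ns_norm x <= 1 /\ opnorm T - d < ns_norm (T x).
Proof. intros [Hl Hb]. apply (sup_approx ns_norm T (blin_hom T Hl) Hb). Qed.

Lemma opnorm_nonneg (T : X -> Y) : blin T -> 0 <= opnorm T.
Proof. intros [Hl Hb]. apply (sup_nonneg ns_norm T (blin_hom T Hl) Hb). Qed.

Lemma blin_comb (T A : X -> Y) lam : blin T -> blin A -> blin (fun x => ns_add (T x) (ns_scal lam (A x))).
Proof.
  intros [[Ta Ts] [C1 H1]] [[Aa As] [C2 H2]]. split; [split|].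
  - intros x y. rewrite Ta, Aa, ns_scal_distr_l.
    rewrite <- !ns_add_assoc. f_equal. rewrite !ns_add_assoc. f_equal. apply ns_add_comm.
  - intros a x. rewrite Ts, As, ns_scal_distr_l, !ns_scal_assoc. f_equal. f_equal. ring.
  - exists (C1 + Rabs lam * C2). intro x.
    eapply Rle_trans; [apply ns_norm_triangle|]. rewrite ns_norm_scal.
    specialize (H1 x). specialize (H2 x). pose proof (Rabs_pos lam).
    assert (Rabs lam * ns_norm (A x) <= Rabs lam * (C2 * ns_norm x)) by (apply Rmult_le_compat_l; auto). nra.
Qed.

Lemma blin_scal (A : X -> Y) lam : blin A -> blin (fun x => ns_scal lam (A x)).
Proof.
  intros [[Aa As] [C2 H2]]. split; [split|].
  - intros x y. rewrite Aa, ns_scal_distr_l. reflexivity.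
  - intros a x. rewrite As, !ns_scal_assoc. f_equal. ring.
  - exists (Rabs lam * C2). intro x. rewrite ns_norm_scal. pose proof (Rabs_pos lam).
    specialize (H2 x). assert (Rabs lam * ns_norm (A x) <= Rabs lam * (C2 * ns_norm x)) by (apply Rmult_le_compat_l; auto). nra.
Qed.

Lemma opnorm_scal (A : X -> Y) lam : blin A -> opnorm (fun y => ns_scal lam (A y)) = Rabs lam * opnorm A.
Proof.
  intro HA. assert (HB := blin_scal A lam HA). apply Rle_antisym.
  - apply opnorm_least; auto. intros x hx. rewrite ns_norm_scal.
    apply Rmult_le_compat_l; [apply Rabs_pos|]. apply opnorm_ge; auto.
  - destruct (Req_dec lam 0) as [e|ne].
    + subst. rewrite Rabs_R0, Rmult_0_l. apply opnorm_nonneg; auto.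
    + assert (pl : 0 < Rabs lam) by (apply Rabs_pos_lt; auto).
      assert (opnorm A <= opnorm (fun y => ns_scal lam (A y)) / Rabs lam).
      { apply opnorm_least; auto. intros x hx. apply (Rmult_le_reg_l (Rabs lam)); auto.
        replace (Rabs lam * (opnorm (fun y => ns_scal lam (A y)) / Rabs lam)) with (opnorm (fun y => ns_scal lam (A y))) by (field; lra).
        rewrite <- ns_norm_scal. apply (opnorm_ge (fun y => ns_scal lam (A y))); auto. }
      apply (Rmult_le_compat_l (Rabs lam)) in H; [|lra].
      replace (Rabs lam * (opnorm (fun y => ns_scal lam (A y)) / Rabs lam)) with (opnorm (fun y => ns_scal lam (A y))) in H by (field; lra). exact H.
Qed.

Lemma opnorm_comb_ge (T A : X -> Y) lam : blin T -> blin A ->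
  opnorm T - Rabs lam * opnorm A <= opnorm (fun x => ns_add (T x) (ns_scal lam (A x))).
Proof.
  intros HT HA. apply Rnot_lt_le. intro hl.
  set (d := opnorm T - Rabs lam * opnorm A - opnorm (fun x => ns_add (T x) (ns_scal lam (A x)))).
  destruct (opnorm_approx T d HT ltac:(unfold d; lra)) as [y [hy hTy]].
  assert (h1 := opnorm_ge _ (blin_comb T A lam HT HA) y hy). simpl in h1.
  assert (h2 := ns_norm_triangle (ns_add (T y) (ns_scal lam (A y))) (ns_scal (-lam) (A y))).
  rewrite <- ns_add_assoc, <- ns_scal_distr_r, Rplus_opp_r, ns_scal0, ns_add_0 in h2.
  rewrite ns_norm_scal, Rabs_Ropp in h2.
  assert (h3 : ns_norm (A y) <= opnorm A) by (apply opnorm_ge; auto).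
  assert (Rabs lam * ns_norm (A y) <= Rabs lam * opnorm A) by (apply Rmult_le_compat_l; [apply Rabs_pos|auto]).
  unfold d in hTy. lra.
Qed.

End Ops.

Definition Qx {X Y : NormedSpace} (T A : X -> Y) (eps : R) (x : X) (lam : R) : Prop :=
  (ns_norm (ns_add (T x) (ns_scal lam (A x))))^2 >=
    (opnorm T)^2 - 2 * eps * opnorm T * opnorm (fun y => ns_scal lam (A y)).

Lemma easy_dir {X Y : NormedSpace} (T A : X -> Y) eps x :
  blin T -> blin A -> ns_norm x = 1 -> (forall lam, Qx T A eps x lam) -> bj_op eps T A.
Proof.
  intros HT HA hx H lam. specialize (H lam). unfold Qx in H. simpl.
  assert (h := opnorm_ge _ (blin_comb T A lam HT HA) x ltac:(lra)). simpl in h.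
  pose proof (ns_norm_nonneg (ns_add (T x) (ns_scal lam (A x)))).
  assert ((ns_norm (ns_add (T x) (ns_scal lam (A x))))^2 <= (opnorm (fun x => ns_add (T x) (ns_scal lam (A x))))^2)
    by (apply pow_incr; lra).
  lra.
Qed.

Lemma Rabs_sub_le a b : Rabs (a - b) <= Rabs a + Rabs b.
Proof. unfold Rminus. rewrite <- (Rabs_Ropp b). apply Rabs_triang. Qed.

Lemma frac_lt a e : 0 <= a -> 0 < e -> a * (e / (a + 1)) < e.
Proof.
  intros ha he. apply (Rmult_lt_reg_r (a + 1)); [lra|].
  replace (a * (e / (a + 1)) * (a + 1)) with (a * e) by (field; lra). nra.
Qed.

Definition conv_R (a : nat -> R) (L : R) : Prop :=
  forall e, 0 < e -> exists N, forall n, (N <= n)%nat -> Rabs (a n - L) < e.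

Lemma conv_R_unique a L1 L2 : conv_R a L1 -> conv_R a L2 -> L1 = L2.
Proof.
  intros h1 h2. apply NNPP. intro ne.
  set (e := Rabs (L1 - L2) / 2).
  assert (pe : 0 < e) by (unfold e; assert (0 < Rabs (L1 - L2)) by (apply Rabs_pos_lt; lra); lra).
  destruct (h1 e pe) as [N1 H1]. destruct (h2 e pe) as [N2 H2].
  specialize (H1 (N1 + N2)%nat ltac:(lia)). specialize (H2 (N1 + N2)%nat ltac:(lia)).
  assert (Rabs (L1 - L2) <= Rabs (a (N1+N2)%nat - L2) + Rabs (a (N1+N2)%nat - L1)).
  { replace (L1 - L2) with ((a (N1+N2)%nat - L2) - (a (N1+N2)%nat - L1)) by ring. apply Rabs_sub_le. }
  unfold e in *. lra.
Qed.

Lemma conv_R_add a b La Lb : conv_R a La -> conv_R b Lb -> conv_R (fun n => a n + b n) (La + Lb).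
Proof.
  intros ha hb e he. destruct (ha (e/2) ltac:(lra)) as [N1 H1]. destruct (hb (e/2) ltac:(lra)) as [N2 H2].
  exists (N1 + N2)%nat. intros n hn. specialize (H1 n ltac:(lia)). specialize (H2 n ltac:(lia)).
  replace (a n + b n - (La + Lb)) with ((a n - La) + (b n - Lb)) by ring.
  eapply Rle_lt_trans; [apply Rabs_triang|]. lra.
Qed.

Lemma conv_R_scal a L k : conv_R a L -> conv_R (fun n => k * a n) (k * L).
Proof.
  intros ha e he. destruct (ha (e / (Rabs k + 1))) as [N H].
  { apply Rdiv_lt_0_compat; auto. pose proof (Rabs_pos k); lra. }
  exists N. intros n hn. specialize (H n hn).
  replace (k * a n - k * L) with (k * (a n - L)) by ring. rewrite Rabs_mult.
  pose proof (Rabs_pos k). pose proof (Rabs_pos (a n - L)).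
  assert (Rabs k * Rabs (a n - L) <= Rabs k * (e / (Rabs k + 1))) by (apply Rmult_le_compat_l; lra).
  assert (Rabs k * (e / (Rabs k + 1)) < e).
  { apply frac_lt; lra. }
  lra.
Qed.

Lemma conv_R_le a L M : conv_R a L -> (forall n, a n <= M) -> L <= M.
Proof.
  intros ha hM. apply Rnot_lt_le. intro hl. destruct (ha (L - M) ltac:(lra)) as [N H].
  specialize (H N (le_n N)). specialize (hM N).
  assert (L - a N <= Rabs (a N - L)) by (rewrite Rabs_minus_sym; apply Rle_abs). lra.
Qed.

Lemma sinc_mono (phi : nat -> nat) : strictly_increasing phi -> forall m n, (m < n)%nat -> (phi m < phi n)%nat.
Proof.
  intros H m n hmn. induction n; [lia|].
  destruct (Nat.eq_dec m n) as [->|ne]; [apply H|]. specialize (H n). specialize (IHn ltac:(lia)). lia.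
Qed.

Lemma sinc_comp (f g : nat -> nat) : strictly_increasing f -> strictly_increasing g -> strictly_increasing (fun n => f (g n)).
Proof. intros hf hg n. apply sinc_mono; auto. Qed.

Lemma conv_sub {X : NormedSpace} (u : nat -> X) l phi : converges u l -> strictly_increasing phi -> converges (fun n => u (phi n)) l.
Proof.
  intros hu hp e he. destruct (hu e he) as [N H]. exists N. intros n hn. apply H.
  pose proof (sinc_ge phi hp n). lia.
Qed.

Lemma conv_unique {X : NormedSpace} (u : nat -> X) l1 l2 : converges u l1 -> converges u l2 -> l1 = l2.
Proof.
  intros h1 h2. apply ns_sub_eq0. apply NNPP. intro ne.
  pose proof (ns_norm_nonneg (ns_sub l1 l2)).
  set (e := ns_norm (ns_sub l1 l2) / 2).
  destruct (h1 e ltac:(unfold e; lra)) as [N1 H1]. destruct (h2 e ltac:(unfold e; lra)) as [N2 H2].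
  specialize (H1 (N1 + N2)%nat ltac:(lia)). specialize (H2 (N1 + N2)%nat ltac:(lia)).
  set (w := u (N1 + N2)%nat) in *.
  assert (E : ns_sub l1 l2 = ns_add (ns_sub l1 w) (ns_sub w l2)).
  { unfold ns_sub. rewrite <- ns_add_assoc. f_equal. rewrite ns_add_assoc, (ns_add_comm _ w), ns_add_opp, ns_0_add. reflexivity. }
  assert (h := ns_norm_triangle (ns_sub l1 w) (ns_sub w l2)). rewrite <- E, (ns_sub_norm_sym l1 w) in h.
  unfold e in *. lra.
Qed.

Lemma blin_conv {X Y : NormedSpace} (T : X -> Y) (u : nat -> X) l : blin T -> converges u l -> converges (fun n => T (u n)) (T l).
Proof.
  intros HT hu e he. assert (hn := opnorm_nonneg T HT).
  destruct (hu (e / (opnorm T + 1))) as [N H]. { apply Rdiv_lt_0_compat; lra. }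
  exists N. intros n hn'. specialize (H n hn'). rewrite <- lin_sub by apply HT.
  eapply Rle_lt_trans; [apply opnorm_bound; auto|].
  pose proof (ns_norm_nonneg (ns_sub (u n) l)).
  assert (opnorm T * ns_norm (ns_sub (u n) l) <= opnorm T * (e / (opnorm T + 1))) by (apply Rmult_le_compat_l; lra).
  assert (opnorm T * (e / (opnorm T + 1)) < e).
  { apply frac_lt; lra. }
  lra.
Qed.

Lemma conv_norm {X : NormedSpace} (u : nat -> X) l : converges u l -> conv_R (fun n => ns_norm (u n)) (ns_norm l).
Proof.
  intros hu e he. destruct (hu e he) as [N H]. exists N. intros n hn. specialize (H n hn).
  apply Rabs_def1.
  - pose proof (ns_norm_rev (u n) l). lra.
  - pose proof (ns_norm_rev l (u n)). rewrite ns_sub_norm_sym in H0. lra.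
Qed.

Section Dual.
Context {X : NormedSpace}.

Lemma blf_hom (f : X -> R) : bounded_linear_functional f -> forall a x, Rabs (f (ns_scal a x)) = Rabs a * Rabs (f x).
Proof. intros [[_ Hs] _] a x. rewrite Hs, Rabs_mult. reflexivity. Qed.

Lemma dn_bound (f : X -> R) : bounded_linear_functional f -> forall x, Rabs (f x) <= dual_norm f * ns_norm x.
Proof. intro H. apply (sup_bound Rabs f (blf_hom f H) (proj2 H)). Qed.

Lemma dn_least (f : X -> R) M : bounded_linear_functional f -> (forall x, ns_norm x <= 1 -> Rabs (f x) <= M) -> dual_norm f <= M.
Proof. intro H. apply (sup_least Rabs f (blf_hom f H) (proj2 H)). Qed.

Lemma dn_nonneg (f : X -> R) : bounded_linear_functional f -> 0 <= dual_norm f.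
Proof. intro H. apply (sup_nonneg Rabs f (blf_hom f H) (proj2 H)). Qed.

Lemma dn_ge (f : X -> R) : bounded_linear_functional f -> forall x, ns_norm x <= 1 -> Rabs (f x) <= dual_norm f.
Proof. intro H. apply (sup_ge Rabs f (blf_hom f H) (proj2 H)). Qed.

Lemma blf_zero : bounded_linear_functional (fun _ : X => 0).
Proof. split; [split|]; intros; try ring. exists 0. intro x. rewrite Rabs_R0. lra. Qed.

Lemma blf_add (f g : X -> R) : bounded_linear_functional f -> bounded_linear_functional g -> bounded_linear_functional (fun x => f x + g x).
Proof.
  intros [[fa fs] [C1 H1]] [[ga gs] [C2 H2]]. split; [split|].
  - intros x y. rewrite fa, ga. ring.
  - intros a x. rewrite fs, gs. ring.
  - exists (C1 + C2). intro x. eapply Rle_trans; [apply Rabs_triang|]. specialize (H1 x). specialize (H2 x). lra.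
Qed.

Lemma blf_scal a (f : X -> R) : bounded_linear_functional f -> bounded_linear_functional (fun x => a * f x).
Proof.
  intros [[fa fs] [C1 H1]]. split; [split|].
  - intros x y. rewrite fa. ring.
  - intros b x. rewrite fs. ring.
  - exists (Rabs a * C1). intro x. rewrite Rabs_mult. specialize (H1 x). pose proof (Rabs_pos a).
    assert (Rabs a * Rabs (f x) <= Rabs a * (C1 * ns_norm x)) by (apply Rmult_le_compat_l; auto). lra.
Qed.

Lemma dn_ext (f g : X -> R) : (forall x, Rabs (f x) = Rabs (g x)) -> dual_norm f = dual_norm g.
Proof.
  intro H. unfold dual_norm, sup_norm. f_equal. apply functional_extensionality. intro c.
  f_equal. apply functional_extensionality. intro r. apply propositional_extensionality.
  split; intros [x [h1 h2]]; exists x; rewrite H in *; auto.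
Qed.

End Dual.

Lemma norming (Z : NormedSpace) (w : Z) : exists g : Z -> R,
  bounded_linear_functional g /\ (forall x, Rabs (g x) <= ns_norm x) /\ g w = ns_norm w.
Proof.
  destruct (classic (w = ns_zero)) as [->|nw].
  - exists (fun _ => 0). split; [apply blf_zero|]. split.
    + intro x. rewrite Rabs_R0. apply ns_norm_nonneg.
    + rewrite ns_norm_zero. reflexivity.
  - assert (pw : 0 < ns_norm w).
    { pose proof (ns_norm_nonneg w). destruct (Req_dec (ns_norm w) 0) as [e|]; [|lra]. apply ns_norm_eq0 in e. contradiction. }
    assert (uniq : forall a b, ns_scal a w = ns_scal b w -> a = b).
    { intros a b E. assert (E2 := f_equal (fun v => ns_norm (ns_sub v (ns_scal b w))) E). simpl in E2.
      rewrite ns_sub_self, ns_norm_zero in E2. unfold ns_sub in E2. rewrite <- ns_scalm1, ns_scal_assoc, <- ns_scal_distr_r, ns_norm_scal in E2.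
      destruct (Req_dec a b); auto. exfalso. assert (0 < Rabs (a + -1 * b)) by (apply Rabs_pos_lt; lra). nra. }
    set (V := NS_VS Z).
    set (W0 := fun v : Z => exists a, v = ns_scal a w).
    set (f0 := fun v : Z => epsilon (inhabits 0) (fun r => exists a, v = ns_scal a w /\ r = a * ns_norm w)).
    assert (f0s : forall a, f0 (ns_scal a w) = a * ns_norm w).
    { intro a. unfold f0.
      assert (ex : exists r, exists b, ns_scal a w = ns_scal b w /\ r = b * ns_norm w) by (exists (a * ns_norm w), a; auto).
      destruct (epsilon_spec (inhabits 0) _ ex) as [b [E ->]]. apply uniq in E. subst. reflexivity. }
    destruct (@hahn_banach V (fun _ => True) W0 (@ns_norm Z) f0) as (F & [Fa Fs] & F0 & Fp).
    + split; [|split]; auto.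
    + split; [|split].
      * exists 0. simpl. rewrite ns_scal0. reflexivity.
      * intros x y [a ->] [b ->]. exists (a + b). simpl. rewrite ns_scal_distr_r. reflexivity.
      * intros k x [a ->]. exists (k * a). simpl. apply ns_scal_assoc.
    + auto.
    + split.
      * intros x y _ _. apply ns_norm_triangle.
      * intros a x ha _. simpl. rewrite ns_norm_scal, Rabs_pos_eq by lra. reflexivity.
    + split.
      * intros x y [a ->] [b ->]. simpl. rewrite <- ns_scal_distr_r, !f0s. ring.
      * intros k x [a ->]. simpl. rewrite ns_scal_assoc, !f0s. ring.
    + intros x [a ->]. rewrite f0s, ns_norm_scal. pose proof (Rle_abs a). nra.
    + assert (gb : forall x, Rabs (F x) <= ns_norm x).
      { intro x. apply Rabs_le. split.
        - assert (h := Fp (ns_scal (-1) x) I). simpl in h.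
          assert (e1 : F (ns_scal (-1) x) = -1 * F x) by (exact (Fs (-1) x I)). rewrite e1 in h.
          rewrite ns_norm_scal, Rabs_m1' in h. lra.
        - apply Fp; auto. }
      exists F. split; [|split]; auto.
      * split; [split|].
        -- intros x y. apply Fa; auto.
        -- intros a x. apply Fs; auto.
        -- exists 1. intro x. rewrite Rmult_1_l. auto.
      * rewrite <- (ns_scal_1 w) at 1. assert (h := F0 (ns_scal 1 w) ltac:(exists 1; auto)). simpl in h.
        rewrite h, f0s. ring.
Qed.

Lemma blf_sub {Z : NormedSpace} (g : Z -> R) a b : bounded_linear_functional g -> g (ns_sub a b) = g a - g b.
Proof.
  intros [[ga gs] _]. unfold ns_sub. rewrite ga, <- ns_scalm1, gs. ring.
Qed.

Lemma weak_cluster {X Y : NormedSpace} (HXR : reflexive X) (T A : X -> Y)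
  (HT : compact_op T) (HA : compact_op A) (u : nat -> X) (hu : forall n, ns_norm (u n) <= 1)
  (tpos : 0 < opnorm T)
  (hT : forall d, 0 < d -> exists N, forall n, (N <= n)%nat -> opnorm T - d < ns_norm (T (u n))) :
  exists x0 phi, strictly_increasing phi /\ M_set T x0 /\
    converges (fun k => T (u (phi k))) (T x0) /\ converges (fun k => A (u (phi k))) (A x0).
Proof.
  assert (bT := compact_blin T HT). assert (bA := compact_blin A HA).
  destruct (proj2 HT u hu) as (phi1 & y & hp1 & cy).
  destruct (proj2 HA (fun n => u (phi1 n)) (fun n => hu (phi1 n))) as (phi2 & z & hp2 & cz).
  set (phi := fun n => phi1 (phi2 n)).
  assert (hp : strictly_increasing phi) by (exact (sinc_comp phi1 phi2 hp1 hp2)).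
  assert (cy' : converges (fun k => T (u (phi k))) y) by (apply (conv_sub (fun n => T (u (phi1 n))) y phi2); auto).
  set (v := fun k => u (phi k)).
  assert (hv : forall k, ns_norm (v k) <= 1) by (intro; apply hu).
  set (V := FUN_VS X).
  set (W := fun f : X -> R => bounded_linear_functional f).
  set (W0 := fun f : X -> R => bounded_linear_functional f /\ exists L, conv_R (fun k => f (v k)) L).
  set (f0 := fun f : X -> R => epsilon (inhabits 0) (fun L => conv_R (fun k => f (v k)) L)).
  assert (f0s : forall f L, conv_R (fun k => f (v k)) L -> f0 f = L).
  { intros f L h. unfold f0. assert (ex : exists L, conv_R (fun k => f (v k)) L) by eauto.
    apply (conv_R_unique _ _ _ (epsilon_spec (inhabits 0) _ ex) h). }
  destruct (@hahn_banach V W W0 dual_norm f0) as (F & [Fa Fs] & F0 & Fp).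
  - split; [|split].
    + apply blf_zero.
    + intros f g hf hg. apply blf_add; auto.
    + intros a f hf. apply blf_scal; auto.
  - split; [|split].
    + split; [apply blf_zero|]. exists 0. intros e he. exists O. intros. simpl. rewrite Rminus_0_r, Rabs_R0. auto.
    + intros f g [hf [L1 c1]] [hg [L2 c2]]. split; [apply blf_add; auto|]. exists (L1 + L2). apply conv_R_add; auto.
    + intros a f [hf [L c]]. split; [apply blf_scal; auto|]. exists (a * L). apply conv_R_scal; auto.
  - intros f [hf _]. exact hf.
  - split.
    + intros f g hf hg. change (dual_norm (fun x => f x + g x) <= dual_norm f + dual_norm g).
      apply dn_least; [apply blf_add; auto|]. intros x hx.
      eapply Rle_trans; [apply Rabs_triang|]. pose proof (dn_ge f hf x hx). pose proof (dn_ge g hg x hx). lra.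
    + intros a f ha hf. change (dual_norm (fun x => a * f x) = a * dual_norm f).
      assert (hf' := blf_scal a f hf). apply Rle_antisym.
      * apply dn_least; auto. intros x hx. rewrite Rabs_mult, Rabs_pos_eq by lra.
        apply Rmult_le_compat_l; [lra|]. apply dn_ge; auto.
      * assert (dual_norm f <= dual_norm (fun x => a * f x) / a).
        { apply dn_least; auto. intros x hx. apply (Rmult_le_reg_l a); auto.
          replace (a * (dual_norm (fun x => a * f x) / a)) with (dual_norm (fun x => a * f x)) by (field; lra).
          rewrite <- (Rabs_pos_eq a) at 1 by lra. rewrite <- Rabs_mult. apply (dn_ge (fun x => a * f x)); auto. }
        apply (Rmult_le_compat_l a) in H; [|lra].
        replace (a * (dual_norm (fun x => a * f x) / a)) with (dual_norm (fun x => a * f x)) in H by (field; lra). exact H.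
  - split.
    + intros f g [hf [L1 c1]] [hg [L2 c2]]. change (f0 (fun x => f x + g x) = f0 f + f0 g).
      rewrite (f0s f L1 c1), (f0s g L2 c2). apply f0s. apply (conv_R_add _ _ _ _ c1 c2).
    + intros a f [hf [L c]]. change (f0 (fun x => a * f x) = a * f0 f).
      rewrite (f0s f L c). apply f0s. apply (conv_R_scal _ _ _ c).
  - intros f [hf [L c]]. rewrite (f0s f L c). apply (conv_R_le _ _ _ c). intro k.
    eapply Rle_trans; [apply Rle_abs|]. apply dn_ge; auto.
  - assert (Fneg : forall f, W f -> - F f <= dual_norm f).
    { intros f hf. assert (e1 : F (fun x => -1 * f x) = -1 * F f) by (exact (Fs (-1) f hf)).
      assert (h := Fp (fun x => -1 * f x) (blf_scal (-1) f hf)).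
      rewrite e1 in h. rewrite (dn_ext (fun x => -1 * f x) f) in h.
      - lra.
      - intro x. rewrite Rabs_mult, Rabs_m1'. ring. }
    destruct (HXR F) as [x0 Hx0].
    + intros f g hf hg. exact (Fa f g hf hg).
    + intros a f hf. exact (Fs a f hf).
    + exists 1. intros f hf. rewrite Rmult_1_l. apply Rabs_le. split.
      * pose proof (Fneg f hf). lra.
      * apply Fp; auto.
    + assert (key : forall f, W0 f -> f x0 = f0 f).
      { intros f hf. rewrite <- Hx0 by (apply hf). apply F0; auto. }
      assert (lim : forall (B : X -> Y) yB, blin B -> converges (fun k => B (v k)) yB -> B x0 = yB).
      { intros B yB hB cB.
        destruct (norming Y (ns_sub (B x0) yB)) as (g & hg & gb & gw).
        set (f := fun x => g (B x)).
        assert (hf : bounded_linear_functional f).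
        { pose proof hB as hB2. destruct hg as [[ga gs] _]. destruct hB as [[Ba Bs] _]. split; [split|].
          - intros a b. unfold f. rewrite Ba, ga. reflexivity.
          - intros a b. unfold f. rewrite Bs, gs. reflexivity.
          - exists (opnorm B). intro x. unfold f. eapply Rle_trans; [apply gb|]. apply opnorm_bound. exact hB2. }
        assert (cf : conv_R (fun k => f (v k)) (g yB)).
        { intros e he. destruct (cB e he) as [N HN]. exists N. intros n hn. unfold f.
          rewrite <- blf_sub by auto. eapply Rle_lt_trans; [apply gb|]. apply HN; auto. }
        assert (E := key f (conj hf (ex_intro _ _ cf))). rewrite (f0s f _ cf) in E. unfold f in E.
        apply ns_sub_eq0. rewrite <- gw, blf_sub by auto. lra. }
      assert (Ty : T x0 = y) by (apply lim; auto).
      assert (Az : A x0 = z) by (apply lim; auto).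
      assert (nx1 : ns_norm x0 <= 1).
      { destruct (norming X x0) as (g & hg & gb & gw).
        assert (dg : dual_norm g <= 1).
        { apply dn_least; auto. intros x hx. specialize (gb x). lra. }
        rewrite <- gw, <- Hx0 by auto. eapply Rle_trans; [apply Fp; auto|]. auto. }
      assert (cn := conv_norm _ _ cy').
      assert (ny1 : ns_norm y <= opnorm T).
      { apply (conv_R_le _ _ _ cn). intro k. apply opnorm_ge; auto. }
      assert (ny2 : opnorm T <= ns_norm y).
      { apply Rnot_lt_le. intro hl. set (d := opnorm T - ns_norm y).
        destruct (hT (d/2) ltac:(unfold d; lra)) as [N1 H1].
        destruct (cn (d/2) ltac:(unfold d; lra)) as [N2 H2].
        specialize (H2 (N1 + N2)%nat ltac:(lia)). specialize (H1 (phi (N1 + N2)%nat)).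
        assert (H1' := H1 ltac:(pose proof (sinc_ge phi hp (N1+N2)%nat); lia)).
        simpl in H2. apply Rabs_def2 in H2. unfold d in *. lra. }
      assert (nx2 : 1 <= ns_norm x0).
      { assert (h := opnorm_bound T bT x0). rewrite Ty in h.
        apply (Rmult_le_reg_l (opnorm T)); auto. lra. }
      exists x0, phi. split; auto. split; [split; [lra | rewrite Ty; lra]|]. split.
      * rewrite Ty. exact cy'.
      * rewrite Az. exact cz.
Qed.

Lemma ns_swap {Y : NormedSpace} (x1 x2 x3 x4 : Y) :
  ns_add (ns_add x1 x2) (ns_add x3 x4) = ns_add (ns_add x1 x3) (ns_add x2 x4).
Proof.
  rewrite <- !ns_add_assoc. f_equal. rewrite !ns_add_assoc. f_equal. apply ns_add_comm.
Qed.

Lemma combo {Y : NormedSpace} (p q : Y) al be rho : 0 <= rho <= 1 ->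
  ns_norm (ns_add p (ns_scal ((1-rho)*al + rho*be) q)) <=
  (1-rho) * ns_norm (ns_add p (ns_scal al q)) + rho * ns_norm (ns_add p (ns_scal be q)).
Proof.
  intro hr.
  assert (E : ns_add p (ns_scal ((1-rho)*al + rho*be) q) =
     ns_add (ns_scal (1-rho) (ns_add p (ns_scal al q))) (ns_scal rho (ns_add p (ns_scal be q)))).
  { rewrite !ns_scal_distr_l, !ns_scal_assoc, ns_swap, <- !ns_scal_distr_r.
    replace (1 - rho + rho) with 1 by ring. rewrite ns_scal_1. reflexivity. }
  rewrite E. eapply Rle_trans; [apply ns_norm_triangle|]. rewrite !ns_norm_scal, !Rabs_pos_eq by lra. lra.
Qed.

Lemma conv_comb {Y : NormedSpace} (a b : nat -> Y) la lb m :
  converges a la -> converges b lb ->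
  converges (fun k => ns_add (a k) (ns_scal m (b k))) (ns_add la (ns_scal m lb)).
Proof.
  intros ha hb e he.
  destruct (ha (e/2) ltac:(lra)) as [N1 H1].
  assert (pm : 0 < Rabs m + 1) by (pose proof (Rabs_pos m); lra).
  destruct (hb (e/2 / (Rabs m + 1))) as [N2 H2]. { apply Rdiv_lt_0_compat; lra. }
  exists (N1 + N2)%nat. intros n hn. specialize (H1 n ltac:(lia)). specialize (H2 n ltac:(lia)).
  assert (E : ns_sub (ns_add (a n) (ns_scal m (b n))) (ns_add la (ns_scal m lb)) =
              ns_add (ns_sub (a n) la) (ns_scal m (ns_sub (b n) lb))).
  { unfold ns_sub. rewrite <- !ns_scalm1, !ns_scal_distr_l, !ns_scal_assoc, ns_swap.
    replace (-1 * m) with (m * -1) by ring. reflexivity. }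
  rewrite E. eapply Rle_lt_trans; [apply ns_norm_triangle|]. rewrite ns_norm_scal.
  assert (h := frac_lt (Rabs m) (e/2) (Rabs_pos m) ltac:(lra)).
  assert (Rabs m * ns_norm (ns_sub (b n) lb) <= Rabs m * (e / 2 / (Rabs m + 1))) by (apply Rmult_le_compat_l; [apply Rabs_pos|lra]).
  lra.
Qed.

Lemma Qx_alt {X Y : NormedSpace} (T A : X -> Y) eps x lam : blin A ->
  (Qx T A eps x lam <-> (ns_norm (ns_add (T x) (ns_scal lam (A x))))^2 >=
       (opnorm T)^2 - 2 * eps * opnorm T * (Rabs lam * opnorm A)).
Proof. intro hA. unfold Qx. rewrite opnorm_scal by auto. tauto. Qed.

Lemma sq_le a b : 0 <= a -> a <= b -> a^2 <= b^2.
Proof. intros. apply pow_incr. lra. Qed.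

Lemma dir_claim {X Y : NormedSpace} (HXR : reflexive X) eps (heps : 0 <= eps < 1) (T A : X -> Y)
  (HT : compact_op T) (HA : compact_op A) (tpos : 0 < opnorm T) s (hs : Rabs s = 1)
  (Hbj : bj_op eps T A) :
  exists x, M_set T x /\ forall mu, 0 <= mu -> Qx T A eps x (s * mu).
Proof.
  assert (bT := compact_blin T HT). assert (bA := compact_blin A HA).
  assert (cnn : 0 <= opnorm A) by (apply opnorm_nonneg; auto).
  set (t := opnorm T) in *. set (c := opnorm A) in *.
  apply NNPP. intro Hno.
  assert (Hf : forall x, M_set T x -> exists mu, 0 < mu /\ ~ Qx T A eps x (s * mu)).
  { intros x hx. apply NNPP. intro h. apply Hno. exists x. split; auto. intros mu hmu.
    destruct (Rle_lt_or_eq_dec 0 mu hmu) as [lt|eq].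
    - apply NNPP. intro hq. apply h. exists mu. auto.
    - subst mu. apply Qx_alt; auto. rewrite Rmult_0_r, ns_scal0, ns_add_0, (proj2 hx).
      fold t. rewrite Rabs_R0. lra. }
  set (r := fun n : nat => / INR (S n)).
  assert (rpos : forall n, 0 < r n) by (intro n; unfold r; apply Rinv_0_lt_compat, lt_0_INR; lia).
  assert (r1 : forall n, r n <= 1).
  { intro n. unfold r. rewrite <- Rinv_1. apply Rinv_le_contravar; [lra|]. apply (le_INR 1). lia. }
  assert (rsmall : forall b, 0 < b -> exists N, forall n, (N <= n)%nat -> r n < b).
  { intros b hb. destruct (nat_big (/ b)) as [N HN]. exists N. intros n hn. unfold r.
    assert (INR N <= INR (S n)) by (apply le_INR; lia).
    assert (0 < / b) by (apply Rinv_0_lt_compat; auto).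
    rewrite <- (Rinv_inv b). apply Rinv_lt_contravar; [apply Rmult_lt_0_compat; lra|lra]. }
  assert (rabs : forall n, Rabs (s * r n) = r n).
  { intro n. rewrite Rabs_mult, hs, Rabs_pos_eq by (left; auto). ring. }
  set (Fn := fun n x => ns_add (T x) (ns_scal (s * r n) (A x))).
  assert (bF : forall n, blin (Fn n)) by (intro n; apply blin_comb; auto).
  assert (Hx : forall n, exists x, ns_norm x <= 1 /\ opnorm (Fn n) - (r n)^2 < ns_norm (Fn n x)).
  { intro n. apply opnorm_approx; auto. specialize (rpos n). nra. }
  destruct (choice _ Hx) as [u hu].
  assert (bndT : forall n, t - r n * (2 * c + 1) < ns_norm (T (u n))).
  { intro n. destruct (hu n) as [hu1 hu2].
    assert (h1 := opnorm_comb_ge T A (s * r n) bT bA). rewrite rabs in h1. fold t c in h1.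
    assert (h2 := ns_norm_triangle (T (u n)) (ns_scal (s * r n) (A (u n)))).
    rewrite ns_norm_scal, rabs in h2.
    assert (h3 : ns_norm (A (u n)) <= c) by (apply opnorm_ge; auto).
    assert (r n * ns_norm (A (u n)) <= r n * c) by (apply Rmult_le_compat_l; [left; auto|auto]).
    specialize (rpos n). specialize (r1 n).
    assert (r n ^ 2 <= r n) by nra.
    unfold Fn in hu2. lra. }
  assert (hT : forall d, 0 < d -> exists N, forall n, (N <= n)%nat -> opnorm T - d < ns_norm (T (u n))).
  { intros d hd. destruct (rsmall (d / (2 * c + 1))) as [N HN]. { apply Rdiv_lt_0_compat; lra. }
    exists N. intros n hn. specialize (HN n hn). specialize (bndT n).
    assert (r n * (2 * c + 1) < d).
    { apply (Rmult_lt_compat_r (2 * c + 1)) in HN; [|lra].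
      replace (d / (2 * c + 1) * (2 * c + 1)) with d in HN by (field; lra). lra. }
    fold t. lra. }
  destruct (weak_cluster HXR T A HT HA u (fun n => proj1 (hu n)) tpos hT) as (x0 & phi & hp & hM & cT & cA).
  destruct (Hf x0 hM) as (mu & hmu & nQ).
  rewrite Qx_alt in nQ by auto. fold t c in nQ.
  rewrite Rabs_mult, hs, Rabs_pos_eq in nQ by lra.
  set (G := fun x => ns_add (T x) (ns_scal (s * mu) (A x))).
  set (f0 := ns_norm (G x0)).
  assert (f0nn : 0 <= f0) by apply ns_norm_nonneg.
  set (d := t^2 - 2 * eps * t * (1 * mu * c) - f0^2).
  assert (dpos : 0 < d) by (unfold d, f0, G; lra).
  assert (cG := conv_comb _ _ _ _ (s * mu) cT cA).
  assert (cn := conv_norm _ _ cG).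
  set (e := Rmin 1 (d / (2 * (2 * f0 + 1)))).
  assert (epos : 0 < e) by (unfold e; apply Rmin_pos; [lra|apply Rdiv_lt_0_compat; lra]).
  assert (e1 : e <= 1) by apply Rmin_l.
  assert (e2 : e * (2 * f0 + 1) <= d / 2).
  { assert (e <= d / (2 * (2 * f0 + 1))) by apply Rmin_r.
    apply (Rmult_le_compat_r (2 * f0 + 1)) in H; [|lra].
    replace (d / (2 * (2 * f0 + 1)) * (2 * f0 + 1)) with (d / 2) in H by (field; lra). lra. }
  destruct (cn e epos) as [K1 HK1].
  set (KK := 2 * (t + c) + 1).
  set (bnd := Rmin mu (d / (2 * mu * KK))).
  assert (bpos : 0 < bnd) by (unfold bnd, KK; apply Rmin_pos; [lra|apply Rdiv_lt_0_compat; nra]).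
  destruct (rsmall bnd bpos) as [N2 HN2].
  set (k := (K1 + N2)%nat).
  set (n := phi k).
  assert (hkn : (k <= n)%nat) by (apply sinc_ge; auto).
  specialize (HK1 k ltac:(unfold k; lia)). simpl in HK1.
  specialize (HN2 n ltac:(unfold k in hkn; lia)).
  set (rr := r n) in *.
  assert (rrpos : 0 < rr) by apply rpos.
  assert (rrmu : rr <= mu) by (eapply Rle_trans; [left; exact HN2| apply Rmin_l]).
  assert (rrK : rr * KK < d / (2 * mu)).
  { assert (rr < d / (2 * mu * KK)) by (eapply Rlt_le_trans; [exact HN2| apply Rmin_r]).
    assert (0 < KK) by (unfold KK; lra).
    apply (Rmult_lt_compat_r KK) in H; auto.
    replace (d / (2 * mu * KK) * KK) with (d / (2 * mu)) in H by (field; lra). exact H. }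
  set (un := u n).
  assert (a1 : ns_norm (G un) < f0 + e).
  { apply Rabs_def2 in HK1. destruct HK1 as [HK1 _]. unfold un, n, f0, G. cbv beta. lra. }
  set (rho := rr / mu).
  assert (rho01 : 0 < rho <= 1).
  { unfold rho. split; [apply Rdiv_lt_0_compat; lra|].
    apply (Rmult_le_reg_r mu); auto. unfold Rdiv. rewrite Rmult_assoc, Rinv_l by lra. lra. }
  set (h := ns_norm (Fn n un)).
  assert (hnn : 0 <= h) by apply ns_norm_nonneg.
  assert (a2 : h <= (1 - rho) * t + rho * (f0 + e)).
  { assert (Ec : s * rr = (1 - rho) * 0 + rho * (s * mu)) by (unfold rho; field; lra).
    unfold h, Fn. fold rr. rewrite Ec.
    eapply Rle_trans; [apply combo; lra|].
    rewrite ns_scal0, ns_add_0.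
    assert (ns_norm (T un) <= t) by (apply opnorm_ge; auto; apply hu).
    assert (ns_norm (ns_add (T un) (ns_scal (s * mu) (A un))) <= f0 + e) by (fold (G un); lra).
    assert (0 <= 1 - rho) by lra.
    assert ((1 - rho) * ns_norm (T un) <= (1 - rho) * t) by (apply Rmult_le_compat_l; auto).
    assert (rho * ns_norm (ns_add (T un) (ns_scal (s * mu) (A un))) <= rho * (f0 + e)) by (apply Rmult_le_compat_l; lra).
    lra. }
  assert (s1 : (f0 + e)^2 <= f0^2 + d/2).
  { assert (e * (2 * f0 + e) <= e * (2 * f0 + 1)) by (apply Rmult_le_compat_l; lra).
    replace ((f0 + e)^2) with (f0^2 + e * (2 * f0 + e)) by ring. lra. }
  assert (s2 : h^2 <= (1 - rho) * t^2 + rho * (f0 + e)^2).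
  { eapply Rle_trans; [apply sq_le; [exact hnn | exact a2]|].
    assert (0 <= rho * (1 - rho) * (t - (f0 + e))^2).
    { apply Rmult_le_pos; [apply Rmult_le_pos; lra| apply pow2_ge_0]. }
    nra. }
  assert (rhomu : rho * mu = rr) by (unfold rho; field; lra).
  assert (s3 : h^2 <= t^2 - 2 * eps * t * (rr * c) - rho * d / 2).
  { assert (rho * (f0 + e)^2 <= rho * (f0^2 + d/2)) by (apply Rmult_le_compat_l; lra).
    assert (Hf0 : f0^2 = t^2 - 2 * eps * t * (1 * mu * c) - d) by (unfold d; ring).
    rewrite <- rhomu.
    assert (E3 : (1 - rho) * t ^ 2 + rho * (f0 ^ 2 + d / 2) = t ^ 2 - 2 * eps * t * (rho * mu * c) - rho * d / 2).
    { rewrite Hf0. field. }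
    lra. }
  assert (hb := Hbj (s * rr)). unfold bj_eps in hb. cbv beta in hb.
  rewrite opnorm_scal in hb by auto. fold t c in hb. assert (rabs2 : Rabs (s * rr) = rr) by apply rabs. rewrite rabs2 in hb.
  assert (opF : opnorm (Fn n) < h + rr^2) by (unfold h, rr; destruct (hu n) as [_ hh]; fold un in hh; lra).
  assert (opnn : 0 <= opnorm (Fn n)) by (apply opnorm_nonneg; auto).
  assert (s4 : (opnorm (Fn n))^2 <= (h + rr^2)^2) by (apply sq_le; lra).
  assert (hle : h <= t + c).
  { unfold h, Fn. fold rr.
    assert (h2 := ns_norm_triangle (T un) (ns_scal (s * rr) (A un))).
    rewrite ns_norm_scal in h2. unfold rr in h2. rewrite rabs in h2. fold rr in h2.
    assert (ns_norm (T un) <= t) by (apply opnorm_ge; auto; apply hu).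
    assert (h3 : ns_norm (A un) <= c) by (apply opnorm_ge; auto; apply hu).
    assert (rr * ns_norm (A un) <= 1 * c).
    { apply Rmult_le_compat; try lra; [apply ns_norm_nonneg| apply r1]. }
    lra. }
  assert (s5 : (h + rr^2)^2 <= h^2 + rr^2 * KK).
  { assert (rr^2 <= rr) by (specialize (r1 n); fold rr in r1; nra).
    assert (rr ^ 2 * (2 * h + rr ^ 2) <= rr ^ 2 * KK).
    { apply Rmult_le_compat_l; [nra|]. unfold KK. specialize (r1 n). fold rr in r1. nra. }
    nra. }
  unfold Fn in s4, opF, opnn. fold rr in hb.
  unfold Fn in s4, opF, opnn. fold rr in s4, opF, opnn.
  assert (rho * d / 2 = rr * (d / (2 * mu))) by (unfold rho; field; lra).
  assert (rr * (rr * KK) < rr * (d / (2 * mu))) by (apply Rmult_lt_compat_l; auto).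
  nra.
Qed.

Section Fin.
Context {X Y : NormedSpace} (T A : X -> Y) (bT : blin T) (bA : blin A).

Lemma lin_opp x : T (ns_opp x) = ns_opp (T x).
Proof. rewrite <- !ns_scalm1. apply (proj2 (proj1 bT)). Qed.
Lemma linA_opp x : A (ns_opp x) = ns_opp (A x).
Proof. rewrite <- !ns_scalm1. apply (proj2 (proj1 bA)). Qed.

Lemma F_opp x lam : ns_norm (ns_add (T (ns_opp x)) (ns_scal lam (A (ns_opp x)))) = ns_norm (ns_add (T x) (ns_scal lam (A x))).
Proof.
  rewrite lin_opp, linA_opp, <- !ns_scalm1, ns_scal_assoc.
  replace (lam * -1) with (-1 * lam) by ring. rewrite <- ns_scal_assoc, <- ns_scal_distr_l, ns_norm_scal, Rabs_m1'. ring.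
Qed.

Lemma Qx_opp eps x lam : Qx T A eps (ns_opp x) lam -> Qx T A eps x lam.
Proof. unfold Qx. rewrite F_opp. auto. Qed.

Lemma M_opp x : M_set T (ns_opp x) -> M_set T x.
Proof. unfold M_set. rewrite lin_opp, !ns_norm_opp. auto. Qed.

Lemma opp_opp (x : X) : ns_opp (ns_opp x) = x.
Proof. rewrite <- !ns_scalm1, ns_scal_assoc. replace (-1 * -1) with 1 by ring. apply ns_scal_1. Qed.

Lemma either_dir eps (heps : 0 <= eps) x : 0 < opnorm T -> M_set T x ->
  (forall mu, 0 <= mu -> Qx T A eps x mu) \/ (forall mu, 0 <= mu -> Qx T A eps x (- mu)).
Proof.
  intros tpos [hx1 hx2]. assert (cnn : 0 <= opnorm A) by (apply opnorm_nonneg; auto).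
  set (t := opnorm T) in *. set (c := opnorm A) in *.
  assert (Q0 : Qx T A eps x 0).
  { apply Qx_alt; auto. rewrite ns_scal0, ns_add_0, hx2. fold t. rewrite Rabs_R0. lra. }
  destruct (classic (forall mu, 0 <= mu -> Qx T A eps x mu)) as [h|h]; [left; auto|right].
  intros b hb. apply NNPP. intro nb.
  apply h. intros a ha. apply NNPP. intro na.
  assert (ap : 0 < a) by (destruct (Rle_lt_or_eq_dec 0 a ha) as [|e]; auto; subst; contradiction).
  assert (bp : 0 < b) by (destruct (Rle_lt_or_eq_dec 0 b hb) as [|e]; auto; subst; rewrite Ropp_0 in nb; contradiction).
  rewrite Qx_alt in na, nb by auto. fold t c in na, nb.
  rewrite Rabs_pos_eq in na by lra. rewrite Rabs_Ropp, Rabs_pos_eq in nb by lra.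
  set (u1 := ns_norm (ns_add (T x) (ns_scal a (A x)))) in *.
  set (u2 := ns_norm (ns_add (T x) (ns_scal (- b) (A x)))) in *.
  assert (u1nn : 0 <= u1) by apply ns_norm_nonneg. assert (u2nn : 0 <= u2) by apply ns_norm_nonneg.
  assert (2 * eps * t * (a * c) >= 0) by (apply Rle_ge; repeat apply Rmult_le_pos; lra).
  assert (2 * eps * t * (b * c) >= 0) by (apply Rle_ge; repeat apply Rmult_le_pos; lra).
  assert (l1 : u1 < t) by nra. assert (l2 : u2 < t) by nra.
  set (rho := a / (a + b)).
  assert (r01 : 0 < rho < 1).
  { unfold rho. split; [apply Rdiv_lt_0_compat; lra|]. apply (Rmult_lt_reg_r (a + b)); [lra|].
    unfold Rdiv. rewrite Rmult_assoc, Rinv_l by lra. lra. }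
  assert (h3 := combo (T x) (A x) a (- b) rho ltac:(lra)).
  replace ((1 - rho) * a + rho * - b) with 0 in h3 by (unfold rho; field; lra).
  rewrite ns_scal0, ns_add_0, hx2 in h3. fold u1 u2 t in h3.
  assert ((1 - rho) * u1 < (1 - rho) * t) by (apply Rmult_lt_compat_l; lra).
  assert (rho * u2 < rho * t) by (apply Rmult_lt_compat_l; lra).
  lra.
Qed.

Lemma conv_R_ge a L M : conv_R a L -> (forall n, M <= a n) -> M <= L.
Proof.
  intros ha hM. apply Rnot_lt_le. intro hl. destruct (ha (M - L) ltac:(lra)) as [N H].
  specialize (H N (le_n N)). specialize (hM N).
  assert (a N - L <= Rabs (a N - L)) by apply Rle_abs. lra.
Qed.

Lemma Qx_closed eps (y : nat -> X) z lam : converges y z -> (forall n, Qx T A eps (y n) lam) -> Qx T A eps z lam.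
Proof.
  intros cy hq. unfold Qx in *.
  set (K := opnorm T ^ 2 - 2 * eps * opnorm T * opnorm (fun y0 => ns_scal lam (A y0))) in *.
  set (G := fun x => ns_add (T x) (ns_scal lam (A x))).
  assert (cG := conv_norm _ _ (blin_conv G y z (blin_comb T A lam bT bA) cy)).
  change (ns_norm (G z) ^ 2 >= K). change (forall n, ns_norm (G (y n)) ^ 2 >= K) in hq.
  pose proof (ns_norm_nonneg (G z)).
  destruct (Rle_lt_dec K 0) as [k0|k0]; [nra|].
  set (m := sqrt K).
  assert (mK : m * m = K) by (apply sqrt_sqrt; lra).
  assert (mnn : 0 <= m) by apply sqrt_pos.
  assert (hm : forall n, m <= ns_norm (G (y n))).
  { intro n. specialize (hq n). pose proof (ns_norm_nonneg (G (y n))). apply Rnot_lt_le. intro hl. nra. }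
  assert (m <= ns_norm (G z)) by (apply (conv_R_ge _ _ _ cG); auto).
  nra.
Qed.

Lemma compact_closed (D : X -> Prop) (y : nat -> X) z : compact_set D -> converges y z -> (forall n, D (y n)) -> D z.
Proof.
  intros HD cy hy. destruct (HD y hy) as (phi & l & hp & Dl & cl).
  assert (z = l) by (apply (conv_unique (fun n => y (phi n))); auto; apply conv_sub; auto). subst; auto.
Qed.

Lemma open_compl (P : X -> Prop) : (forall (y : nat -> X) (z : X), converges y z -> (forall n, P (y n)) -> P z) -> @Defs.open_set X (fun x : X => ~ P x).
Proof.
  intros Hc x nPx. apply NNPP. intro H.
  assert (Hy : forall n : nat, exists y, ns_norm (ns_sub y x) < / INR (S n) /\ P y).
  { intro n. apply NNPP. intro hn. apply H. exists (/ INR (S n)). split.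
    - apply Rinv_0_lt_compat, lt_0_INR. lia.
    - intros y hy hP. apply hn. exists y. auto. }
  destruct (choice _ Hy) as [y hy]. apply nPx. apply (Hc y); [|intro n; apply hy].
  intros e he. destruct (nat_big (/ e)) as [N HN]. exists N. intros n hn.
  eapply Rlt_le_trans; [apply hy|].
  assert (INR N <= INR (S n)) by (apply le_INR; lia).
  assert (0 < / e) by (apply Rinv_0_lt_compat; auto).
  rewrite <- (Rinv_inv e). left. apply Rinv_lt_contravar; [apply Rmult_lt_0_compat; lra|lra].
Qed.

End Fin.

Lemma hard_dir {X Y : NormedSpace} (HXR : reflexive X) eps (heps : 0 <= eps < 1) (T A : X -> Y)
  (HT : compact_op T) (HA : compact_op A)
  (D : X -> Prop) (HDne : exists x, D x) (HDc : compact_set D) (HDconn : connected_set D)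
  (HM : forall x, M_set T x <-> (D x \/ D (ns_opp x))) :
  bj_op eps T A -> exists x, M_set T x /\ forall lam, Qx T A eps x lam.
Proof.
  intro Hbj. assert (bT := compact_blin T HT). assert (bA := compact_blin A HA).
  assert (tnn := opnorm_nonneg T bT).
  destruct (Rle_lt_or_eq_dec 0 (opnorm T) tnn) as [tpos|t0].
  2:{ destruct HDne as [x Dx]. exists x. split; [apply HM; auto|]. intro lam. unfold Qx. rewrite <- t0.
      pose proof (pow2_ge_0 (ns_norm (ns_add (T x) (ns_scal lam (A x))))). lra. }
  assert (toD : forall sg, (exists x, M_set T x /\ forall mu, 0 <= mu -> Qx T A eps x (sg * mu)) ->
                 exists x, D x /\ forall mu, 0 <= mu -> Qx T A eps x (sg * mu)).
  { intros sg (x & hx & hq). destruct (proj1 (HM x) hx) as [Dx|Dx].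
    - exists x. auto.
    - exists (ns_opp x). split; auto. intros mu hmu. apply (Qx_opp T A bT bA). rewrite opp_opp. auto. }
  destruct (toD 1 (dir_claim HXR eps heps T A HT HA tpos 1 Rabs_R1 Hbj)) as (xp & Dxp & Hxp).
  destruct (toD (-1) (dir_claim HXR eps heps T A HT HA tpos (-1) Rabs_m1' Hbj)) as (xn & Dxn & Hxn).
  set (DP := fun x => D x /\ forall mu, 0 <= mu -> Qx T A eps x (1 * mu)).
  set (DN := fun x => D x /\ forall mu, 0 <= mu -> Qx T A eps x (-1 * mu)).
  assert (clo : forall sg, forall (y : nat -> X) z, converges y z ->
             (forall n, D (y n) /\ forall mu, 0 <= mu -> Qx T A eps (y n) (sg * mu)) ->
             D z /\ forall mu, 0 <= mu -> Qx T A eps z (sg * mu)).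
  { intros sg y z cy hy. split.
    - apply (compact_closed D y z HDc cy). intro n. apply hy.
    - intros mu hmu. apply (Qx_closed T A bT bA eps y z); auto. intro n. apply hy; auto. }
  destruct (classic (exists x, DP x /\ DN x)) as [(x & [Dx HP] & [_ HN]) | nboth].
  - exists x. split; [apply HM; auto|]. intro lam.
    destruct (Rle_dec 0 lam) as [l|l].
    + replace lam with (1 * lam) by ring. auto.
    + replace lam with (-1 * (- lam)) by ring. apply HN. lra.
  - exfalso.
    destruct (HDconn (fun x => ~ DN x) (fun x => ~ DP x)) as (z & Dz & nN & nP).
    + apply open_compl. apply clo.
    + apply open_compl. apply clo.
    + intros x Dx. apply NNPP. intro h. apply nboth. exists x. split; apply NNPP; intro h'; apply h; auto.
    + exists xp. split; auto. intro h. apply nboth. exists xp. split; auto. split; auto.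
    + exists xn. split; auto. intro h. apply nboth. exists xn. split; auto. split; auto.
    + assert (Mz : M_set T z) by (apply HM; auto).
      destruct (either_dir T A bA eps (proj1 heps) z tpos Mz) as [h|h].
      * apply nP. split; auto. intros mu hmu. rewrite Rmult_1_l. auto.
      * apply nN. split; auto. intros mu hmu. replace (-1 * mu) with (- mu) by ring. auto.
Qed.

Theorem mainTheorem6 (X Y : NormedSpace) (HXB : Banach X) (HXR : reflexive X)
  (eps : R) (Heps : 0 <= eps < 1)
  (T A : X -> Y) (HT : compact_op T) (HA : compact_op A)
  (D : X -> Prop) (HDne : exists x, D x) (HDS : forall x, D x -> ns_norm x = 1)
  (HDc : compact_set D) (HDconn : connected_set D)
  (HM : forall x, M_set T x <-> (D x \/ D (ns_opp x))) :
  (bj_op eps T A <->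
     exists x, M_set T x /\
       forall lam : R,
         (ns_norm (ns_add (T x) (ns_scal lam (A x))))^2 >=
           (opnorm T)^2 - 2 * eps * opnorm T * opnorm (fun y => ns_scal lam (A y)))
  /\
  ((forall x, M_set T x -> M_set A x) ->
     (bj_op eps T A <-> exists x, M_set T x /\ bj_vec eps (T x) (A x))).
Proof.
  assert (bT := compact_blin T HT). assert (bA := compact_blin A HA).
  assert (P1 : bj_op eps T A <-> exists x, M_set T x /\ forall lam, Qx T A eps x lam).
  { split.
    - apply (hard_dir HXR eps Heps T A HT HA D HDne HDc HDconn HM).
    - intros (x & [hx1 _] & hq). apply (easy_dir T A eps x bT bA hx1 hq). }
  split; [exact P1|].
  intro Hsub. rewrite P1.
  assert (eqv : forall x, M_set T x -> ((forall lam, Qx T A eps x lam) <-> bj_vec eps (T x) (A x))).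
  { intros x hx. destruct (Hsub x hx) as [_ hA]. destruct hx as [_ hT].
    unfold bj_vec, bj_eps. split; intros H lam; specialize (H lam).
    - apply Qx_alt in H; auto. rewrite ns_norm_scal, hT, hA. exact H.
    - apply Qx_alt; auto. rewrite ns_norm_scal, hT, hA in H. exact H. }
  split; intros (x & hx & h); exists x; split; auto; apply (eqv x hx); auto.
Qed.
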